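(* Let $(e_i)_{i\in\omega}$ be a sequence of events with $<_0$, $\mathrm{Add},\mathrm{Rem},\mathrm{Cnt}$, $\mathrm{val}$, $\chi$ as in the context, and let $\gamma$ be a function. Let FS1$'$ be the property obtained from FS1 by replacing its last clause (there is no event $r$ with $\mathrm{Rem}^1(r)$, $\gamma(r)=\gamma(a)$ and $\gamma(a)<_0 r<_0 a$) by the clause: there is no event $b$ with $\mathrm{Rem}(b)$, $\chi(b)\neq f$, $\gamma(a)<_0 b<_0 a$ and $\mathrm{val}(b)=\mathrm{val}(a)$. Then $\gamma$ satisfies FS0, FS1 and FS2 if and only if $\gamma$ satisfies FS0, FS1$'$ and FS2.
   Context: Setting: an infinite sequence of events $(e_i)_{i\in\omega}$, linearly ordered by $<_0$ where $e_i<_0e_j$ iff $i<j$. Three unary predicates $\mathrm{Add},\mathrm{Rem},\mathrm{Cnt}$ partition the events. Each event $a$ has a key $\mathrm{val}(a)\in\mathbb N$ and a status $\chi(a)\in\{0,1,f\}$, with $\chi(a)\in\{0,1\}$ whenever $\mathrm{Cnt}(a)$. Notation: for $p\in\{0,1,f\}$, $\mathrm{Add}^p(a)$ abbreviates $\mathrm{Add}(a)\wedge\chi(a)=p$, and $\mathrm{Rem}^p(a)$ similarly; $\mathrm{Cnt}^p$ similarly for $p\in\{0,1\}$; for $p\in\{0,1\}$, $\mathrm{Op}^p(a)$ abbreviates $(\mathrm{Add}(a)\vee\mathrm{Rem}(a)\vee\mathrm{Cnt}(a))\wedge\chi(a)=p$. FS0: $<_0$ is a linear ordering of the events; $\mathrm{Add},\mathrm{Rem},\mathrm{Cnt}$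 are pairwise disjoint; $\gamma$ is defined on the set of $\mathrm{Op}^1$ events and its values are $\mathrm{Add}^0$ events. FS1: for every event $a$ with $\mathrm{Op}^1(a)$: $\gamma(a)<_0 a$, $\mathrm{Add}^0(\gamma(a))$, $\mathrm{val}(a)=\mathrm{val}(\gamma(a))$, and there is no event $r$ with $\mathrm{Rem}^1(r)$, $\gamma(r)=\gamma(a)$ and $\gamma(a)<_0 r<_0 a$. FS2: for all events $a<_0 b$ with $\mathrm{Add}^0(a)$ and $\mathrm{Op}^0(b)$: if $\mathrm{val}(a)=\mathrm{val}(b)$ then there is an event $r$ with $a<_0 r<_0 b$, $\mathrm{Rem}^1(r)$ and $a=\gamma(r)$. *)

(* Defs.v *)
(* Events are e_i, identified with their index i : nat;
   e_i <_0 e_j iff i < j. *)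
From Stdlib Require Import Arith.

Inductive status := S0 | S1 | Sf.

Section Events.
Variables (Add Rem Cnt : nat -> Prop) (val : nat -> nat) (chi : nat -> status).

Definition Add_ (p : status) (a : nat) : Prop := Add a /\ chi a = p.
Definition Rem_ (p : status) (a : nat) : Prop := Rem a /\ chi a = p.
Definition Op_ (p : status) (a : nat) : Prop :=
  (Add a \/ Rem a \/ Cnt a) /\ chi a = p.

Definition setting : Prop :=
  (forall a, Add a \/ Rem a \/ Cnt a) /\
  (forall a, ~ (Add a /\ Rem a)) /\ (forall a, ~ (Add a /\ Cnt a)) /\
  (forall a, ~ (Rem a /\ Cnt a)) /\
  (forall a, Cnt a -> chi a <> Sf).

Variable gamma : nat -> option nat.

(* FS0 (the ordering <_0 on indices is linear by construction) *)
Definition FS0 : Prop :=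
  (forall a, ~ (Add a /\ Rem a)) /\ (forall a, ~ (Add a /\ Cnt a)) /\
  (forall a, ~ (Rem a /\ Cnt a)) /\
  (forall a, Op_ S1 a <-> gamma a <> None) /\
  (forall a g, gamma a = Some g -> Add_ S0 g).

Definition FS1 : Prop :=
  forall a, Op_ S1 a -> exists g, gamma a = Some g /\
    g < a /\ Add_ S0 g /\ val a = val g /\
    ~ (exists r, Rem_ S1 r /\ gamma r = Some g /\ g < r /\ r < a).

Definition FS1' : Prop :=
  forall a, Op_ S1 a -> exists g, gamma a = Some g /\
    g < a /\ Add_ S0 g /\ val a = val g /\
    ~ (exists b, Rem b /\ chi b <> Sf /\ g < b /\ b < a /\ val b = val a).

Definition FS2 : Prop :=
  forall a b, a < b -> Add_ S0 a -> Op_ S0 b -> val a = val b ->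
    exists r, a < r /\ r < b /\ Rem_ S1 r /\ gamma r = Some a.

End Events.

(* Main.v *)
Require Import Defs.
From Stdlib Require Import Arith Lia.

Theorem lemma2p2 (Add Rem Cnt : nat -> Prop) (val : nat -> nat)
  (chi : nat -> status) (gamma : nat -> option nat) :
  setting Add Rem Cnt chi ->
  ((FS0 Add Rem Cnt chi gamma /\ FS1 Add Rem Cnt val chi gamma /\
    FS2 Add Rem Cnt val chi gamma)
   <->
   (FS0 Add Rem Cnt chi gamma /\ FS1' Add Rem Cnt val chi gamma /\
    FS2 Add Rem Cnt val chi gamma)).
Proof.
  intros _. unfold FS1, FS1', FS2, Add_, Rem_, Op_.
  split; intros [H0 [H1 H2]]; split; try assumption; split; try assumption.
  - intros a Ha. destruct (H1 a Ha) as [g [Hg [Hga [HAg [Hv Hno]]]]].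
    exists g; split; [assumption|split; [assumption|split; [assumption|split; [assumption|]]]].
    intros [b [Rb [Cb [Hgb [Hba Hvb]]]]].
    destruct (chi b) eqn:Ec; [| |congruence].
    + destruct (H2 g b Hgb HAg) as [r [Hr1 [Hr2 [Hr3 Hr4]]]]; [split; [right; left; exact Rb|exact Ec]|lia|].
      apply Hno. exists r. repeat split; try apply Hr3; auto; lia.
    + destruct (H1 b) as [g' [Hg' [Hg'b [HAg' [Hv' Hno']]]]]; [split; [right; left; exact Rb|exact Ec]|].
      destruct (Nat.lt_trichotomy g g') as [Hlt|[Heq|Hlt]].
      * destruct (H2 g g' Hlt HAg) as [r [Hr1 [Hr2 [Hr3 Hr4]]]];
          [split; [left; apply HAg'|apply HAg']|lia|].
        apply Hno. exists r. repeat split; try apply Hr3; auto; lia.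
      * subst g'. apply Hno. exists b. repeat split; auto.
      * destruct (H2 g' g Hlt HAg') as [r [Hr1 [Hr2 [Hr3 Hr4]]]];
          [split; [left; apply HAg|apply HAg]|lia|].
        apply Hno'. exists r. repeat split; try apply Hr3; auto; lia.
  - intros a Ha. destruct (H1 a Ha) as [g [Hg [Hga [HAg [Hv Hno]]]]].
    exists g; split; [assumption|split; [assumption|split; [assumption|split; [assumption|]]]].
    intros [r [[Rr Cr] [Hgr [Hgr' Hra]]]].
    apply Hno. exists r.
    destruct (H1 r) as [g' [Hg' [_ [_ [Hv' _]]]]]; [split; [right; left; exact Rr|exact Cr]|].
    rewrite Hgr in Hg'. injection Hg' as <-.
    repeat split; auto; try congruence; lia.
Qed.
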